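(* Let $R>0$ and $d\in\mathbb{N}$ be such that $R-x\in\mathcal Q((1-x^2)^3)_d$. Then for every $k\in\mathbb{N}$ we have $R-x^k,\ R+x^k\in\mathcal Q((1-x^2)^3)_{dk}$ and $R-T_k(x),\ R+T_k(x)\in\mathcal Q((1-x^2)^3)_{dk}$.
   Context: For univariate polynomials, $\Sigma[x]_m$ is the cone of sums of squares of degree at most $m$, and $\mathcal Q((1-x^2)^3)_m=\Sigma[x]_m+(1-x^2)^3\Sigma[x]_{m-6}$. $T_k(x)=\cos(k\arccos x)$ is the Chebyshev polynomial of the first kind. *)

(* Defs.v *)
From HB Require Import structures.
From mathcomp Require Import all_boot all_order all_algebra.
From mathcomp Require Import reals.
Set Implicit Arguments. Unset Strict Implicit. Unset Printing Implicit Defensive.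
Import Order.TTheory GRing.Theory Num.Theory.
Local Open Scope ring_scope.

Definition is_sos (R : realType) (f : {poly R}) : Prop :=
  exists s : seq {poly R}, f = \sum_(p <- s) p ^+ 2.

(* Sigma[x]_m : sums of squares of degree at most m (deg f <= m <-> size f <= m+1).
   The zero polynomial has degree -oo, so it belongs to every Sigma[x]_m. *)
Definition sos_deg (R : realType) (m : nat) (f : {poly R}) : Prop :=
  is_sos f /\ (size f <= m.+1)%N.

(* Sigma[x]_(m - 6) with m possibly < 6 : for m - 6 < 0 it is {0}. *)
Definition sos_deg_minus6 (R : realType) (m : nat) (f : {poly R}) : Prop :=
  is_sos f /\ (f = 0 \/ (size f + 6 <= m.+1)%N).

Definition gQ (R : realType) : {poly R} := (1 - 'X ^+ 2) ^+ 3.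

Definition inQ (R : realType) (m : nat) (f : {poly R}) : Prop :=
  exists s0 s1 : {poly R},
    sos_deg m s0 /\ sos_deg_minus6 m s1 /\ f = s0 + gQ R * s1.

(* Chebyshev polynomials of the first kind, T_k(cos t) = cos (k t),
   via the standard three-term recurrence. *)
Fixpoint cheb_pair (R : realType) (k : nat) : {poly R} * {poly R} :=
  match k with
  | 0 => (1, 'X)
  | k'.+1 => let (a, b) := cheb_pair R k' in (b, 2%:R *: 'X * b - a)
  end.
Definition chebT (R : realType) (k : nat) : {poly R} := (cheb_pair R k).1.

(* Main.v *)
Require Import Defs.
From HB Require Import structures.
From mathcomp Require Import all_boot all_order all_algebra.
From mathcomp Require Import reals.
From mathcomp Require Import ring lra zify.
Import Order.TTheory GRing.Theory Num.Theory.
Local Open Scope ring_scope.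

Section Aux.
Variable R : realType.
Implicit Types p q a b : {poly R}.

Lemma sos0 : is_sos (0 : {poly R}).
Proof. by exists [::]; rewrite big_nil. Qed.

Lemma sos_sq q : is_sos (q ^+ 2).
Proof. by exists [:: q]; rewrite big_cons big_nil addr0. Qed.

Lemma sos_add a b : is_sos a -> is_sos b -> is_sos (a + b).
Proof.
by move=> [s ->] [t ->]; exists (s ++ t); rewrite big_cat.
Qed.

Lemma sos_mul a b : is_sos a -> is_sos b -> is_sos (a * b).
Proof.
move=> [s ->] [t ->]; elim: s => [|x s IH]; first by rewrite big_nil mul0r; exact: sos0.
rewrite big_cons mulrDl; apply: sos_add => //.
have G (u : seq {poly R}) : is_sos (x ^+ 2 * \sum_(q <- u) q ^+ 2).
  rewrite big_distrr /=; elim: u => [|y u IHt]; first by rewrite big_nil; exact: sos0.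
  rewrite big_cons; apply: sos_add => //.
  by rewrite -exprMn; exact: sos_sq.
exact: G.
Qed.

Lemma sos_comp a p : is_sos a -> is_sos (a \Po p).
Proof.
move=> [s ->]; exists [seq q \Po p | q <- s].
by rewrite rmorph_sum big_map; apply: eq_bigr => q _; rewrite rmorphXn.
Qed.

Lemma key (r : R) d k p h s0 s1 :
  sos_deg d s0 -> sos_deg_minus6 d s1 -> r%:P - 'X = s0 + gQ R * s1 ->
  1 - p ^+ 2 = (1 - 'X ^+ 2) * h -> is_sos h -> (size p <= k.+1)%N ->
  (size h <= (2 * k).-1)%N -> inQ (d * k) (r%:P - p).
Proof.
move=> [S0 Z0] [S1 Z1] E Hp Sh Zp Zh.
exists (s0 \Po p), (h ^+ 3 * (s1 \Po p)); split; [|split].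
- split; first exact: sos_comp.
  apply: leq_trans (size_comp_poly_leq _ _) _; rewrite ltnS.
  apply: leq_mul; lia.
- split; first by apply: sos_mul; [rewrite !exprS expr0 mulr1; do 2 apply: sos_mul => //
    | apply: sos_comp].
  have [->|s1n0] := eqVneq s1 0; first by left; rewrite comp_poly0 mulr0.
  have [->|hn0] := eqVneq h 0; first by left; rewrite expr0n /= mul0r.
  right; case: Z1 => [/eqP|Z1]; first by rewrite (negbTE s1n0).
  have h1 : (0 < size h)%N by rewrite size_poly_gt0.
  have s11 : (0 < size s1)%N by rewrite size_poly_gt0.
  apply: leq_trans (leq_add (size_polyMleq _ _) (leqnn 6)) _.
  have A := size_poly_exp_leq h 3.
  have B := size_comp_poly_leq s1 p.
  have C : ((size s1).-1 * (size p).-1 <= (size s1).-1 * k)%N by apply: leq_mul; lia.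
  have D : (((size s1).-1 + 6) * k <= d * k)%N by apply: leq_mul; lia.
  have E1 : ((size h).-1 * 3 + 6 <= 6 * k)%N by lia.
  rewrite mulnDl in D.
  move: A B C D E1; set a := (_ * 3)%N; set b := (_ * (size p).-1)%N;
    set c := ((size s1).-1 * k)%N; set e := (d * k)%N.
  clearbody a b c e; move: (size (h ^+ 3)) (size (s1 \Po p)) => x y; lia.
- have := congr1 (fun q => q \Po p) E => /=.
  rewrite comp_polyB comp_polyC comp_polyX => ->.
  rewrite comp_polyD comp_polyM /gQ rmorphXn rmorphB rmorph1 rmorphXn /= comp_polyX.
  rewrite Hp; ring.
Qed.

Fixpoint hx k : {poly R} := if k is k'.+1 then hx k' + ('X ^+ k') ^+ 2 else 0.

Lemma hx_sos k : is_sos (hx k).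
Proof. elim: k => [|k IH] /=; [exact: sos0| apply: sos_add => //; exact: sos_sq]. Qed.

Lemma hx_id k : 1 - ('X ^+ k) ^+ 2 = (1 - 'X ^+ 2) * hx k.
Proof.
elim: k => [|k IH] /=; first by rewrite expr0 expr1n subrr mulr0.
rewrite mulrDr -IH (exprS _ k); set y := 'X ^+ k. ring.
Qed.

Lemma hx_size k : (size (hx k) <= (2 * k).-1)%N.
Proof.
elim: k => [|k IH] /=; first by rewrite size_poly0.
apply: leq_trans (size_polyD _ _) _; rewrite geq_max; apply/andP; split.
  by apply: leq_trans IH _; lia.
by rewrite -exprM size_polyXn; lia.
Qed.

Fixpoint TV k : {poly R} * {poly R} :=
  if k is k'.+1 then let (t, v) := TV k' in ('X * t - (1 - 'X ^+ 2) * v, 'X * v + t)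
  else (1, 0).

Lemma TV_id k : 1 - (TV k).1 ^+ 2 = (1 - 'X ^+ 2) * (TV k).2 ^+ 2.
Proof.
elim: k => [|k IH] /=; first by rewrite expr1n subrr expr0n /= mulr0.
case: (TV k) IH => t v /= IH.
have -> : 1 - ('X * t - (1 - 'X ^+ 2) * v) ^+ 2 =
   (1 - t ^+ 2) - (1 - 'X ^+ 2) * ('X ^+ 2 - 1 + (1 - 'X ^+ 2)) * v ^+ 2
   + (1 - 'X ^+ 2) * ('X * v + t) ^+ 2 - (1 - 'X ^+ 2) * v ^+ 2 by ring.
rewrite IH; ring.
Qed.

Lemma TV_size k : (size (TV k).1 <= k.+1)%N /\ (size (TV k).2 <= k)%N.
Proof.
elim: k => [|k [IH1 IH2]] /=; first by rewrite size_poly1 size_poly0.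
case: (TV k) IH1 IH2 => t v /= IH1 IH2.
have Sw : (size ((1 - 'X ^+ 2)%R : {poly R}) <= 3)%N.
  apply: leq_trans (size_polyD _ _) _; rewrite size_polyN size_polyXn size_poly1 //.
have SX : size ('X : {poly R}) = 2 by rewrite size_polyX.
split.
- apply: leq_trans (size_polyD _ _) _; rewrite size_polyN geq_max; apply/andP; split.
  + apply: leq_trans (size_polyMleq _ _) _; rewrite -subn1 leq_subLR; apply: leq_trans (leq_add (eq_leq SX) IH1) _; lia.
  + apply: leq_trans (size_polyMleq _ _) _; rewrite -subn1 leq_subLR; apply: leq_trans (leq_add Sw IH2) _; lia.
- apply: leq_trans (size_polyD _ _) _; rewrite geq_max; apply/andP; split; last by apply: leq_trans IH1 _.
  apply: leq_trans (size_polyMleq _ _) _; rewrite -subn1 leq_subLR; apply: leq_trans (leq_add (eq_leq SX) IH2) _; lia.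
Qed.

Lemma TV_rec k : (TV k.+2).1 = 2%:R *: 'X * (TV k.+1).1 - (TV k).1.
Proof.
rewrite /=; case: (TV k) => t v /=.
rewrite -mul_polyC rmorph_nat; ring.
Qed.

Lemma cheb_TV k : cheb_pair R k = ((TV k).1, (TV k.+1).1).
Proof.
elim: k => [|k IH]; first by rewrite /= mulr1 mulr0 subr0.
by rewrite /= IH TV_rec.
Qed.

End Aux.
Arguments key {R r d k p h s0 s1}.
Arguments sos_sq {R}.

Theorem lemma16 (R : realType) (r : R) (d : nat) :
  0 < r -> inQ d (r%:P - 'X) ->
  forall k : nat,
    inQ (d * k) (r%:P - 'X ^+ k) /\ inQ (d * k) (r%:P + 'X ^+ k) /\
    inQ (d * k) (r%:P - chebT R k) /\ inQ (d * k) (r%:P + chebT R k).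
Proof.
move=> _ [s0 [s1 [H0 [H1 E]]]] k.
have Hx := hx_id R k; have Sx := hx_size R k; have Ox := hx_sos R k.
have [T1 T2] := TV_size R k.
have HT := TV_id R k.
have Ch : chebT R k = (TV R k).1 by rewrite /chebT cheb_TV.
have Zv : (size ((TV R k).2 ^+ 2) <= (2 * k).-1)%N.
  by apply: leq_trans (size_polyMleq _ _) _; lia.
split; [|split; [|split]].
- by apply: key H0 H1 E Hx Ox _ Sx; rewrite size_polyXn.
- rewrite -[X in _ + X]opprK.
  apply: (key H0 H1 E _ Ox _ Sx); first by rewrite sqrrN.
  by rewrite size_polyN size_polyXn.
- by rewrite Ch; apply: key H0 H1 E HT (sos_sq _) T1 Zv.
- rewrite Ch -[X in _ + X]opprK.
  apply: (key H0 H1 E _ (sos_sq _) _ Zv); first by rewrite sqrrN.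
  by rewrite size_polyN.
Qed.
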